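(* Let $P$ be a finite poset and fix a real number $q\geq 0$. For $p\in P$ let $T_p^q\colon \mathcal{J}(P)\to\mathbb{R}$ be the statistic $T_p^q\coloneqq T_p^+-q\,T_p^-$. Then the statistics $T_p^q$ ($p\in P$) are linearly independent over $\mathbb{R}$, and they are also linearly independent from the constant function $1$ (i.e., $1\notin\operatorname{span}_{\mathbb{R}}\{T_p^q\colon p\in P\}$).
   Context: $\mathcal{J}(P)$ denotes the set of order ideals (downward-closed subsets) of $P$. For $p\in P$ and $I\in\mathcal{J}(P)$: $T_p^+(I)=1$ if $p$ is a minimal element of $P\setminus I$ and $0$ otherwise; $T_p^-(I)=1$ if $p$ is a maximal element of $I$ and $0$ otherwise. *)

(* Defs.v *)
From HB Require Import structures.
From mathcomp Require Import all_boot all_order all_algebra.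
From mathcomp Require Import reals.
Set Implicit Arguments. Unset Strict Implicit. Unset Printing Implicit Defensive.
Import Order.TTheory GRing.Theory Num.Theory.
Local Open Scope order_scope.

Definition is_ideal (d : Order.disp_t) (P : finPOrderType d) (I : {set P}) : bool :=
  [forall x : P, forall y : P, ((y \in I) && (x <= y)) ==> (x \in I)].

Definition Tplus (d : Order.disp_t) (P : finPOrderType d) (p : P) (I : {set P}) : bool :=
  (p \notin I) && [forall x : P, (x \notin I) ==> ~~ (x < p)].

Definition Tminus (d : Order.disp_t) (P : finPOrderType d) (p : P) (I : {set P}) : bool :=
  (p \in I) && [forall x : P, (x \in I) ==> ~~ (p < x)].

Definition Tq (R : realType) (d : Order.disp_t) (P : finPOrderType d) (q : R) (p : P)
  (I : {set P}) : R :=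
  ((Tplus p I)%:R - q * (Tminus p I)%:R)%R.

(* Main.v *)
Require Import Defs.
From HB Require Import structures.
From mathcomp Require Import all_boot all_order all_algebra.
From mathcomp Require Import reals.
From mathcomp Require Import lra.
Import Order.TTheory GRing.Theory Num.Theory.
Local Open Scope ring_scope.

Section Aux.
Variables (R : realType) (d : Order.disp_t) (P : finPOrderType d) (q : R).

Lemma idealP (I : {set P}) :
  reflect (forall x y, y \in I -> (x <= y)%O -> x \in I) (is_ideal I).
Proof.
apply: (iffP forallP) => H.
  move=> x y yI xy; move/forallP: (H x) => /(_ y); by rewrite yI xy.
move=> x; apply/forallP => y; apply/implyP => /andP[]; exact: H.
Qed.

Lemma TplusP (p : P) (I : {set P}) :
  reflect (p \notin I /\ forall x, x \notin I -> ~~ (x < p)%O) (Tplus p I).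
Proof.
apply: (iffP andP) => [[h1 /forallP h2]|[h1 h2]]; split => //.
  by move=> x xI; move/implyP: (h2 x); apply.
by apply/forallP => x; apply/implyP; apply: h2.
Qed.

Lemma TminusP (p : P) (I : {set P}) :
  reflect (p \in I /\ forall x, x \in I -> ~~ (p < x)%O) (Tminus p I).
Proof.
apply: (iffP andP) => [[h1 /forallP h2]|[h1 h2]]; split => //.
  by move=> x xI; move/implyP: (h2 x); apply.
by apply/forallP => x; apply/implyP; apply: h2.
Qed.

Lemma ideal_setU1 (p : P) (I : {set P}) : p \notin I ->
  (is_ideal (p |: I) && Tminus p (p |: I)) = (is_ideal I && Tplus p I).
Proof.
move=> pI; apply/idP/idP.
- case/andP => /idealP Hid /TminusP [_ Hm]; apply/andP; split.
  + apply/idealP => x y yI xy.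
    have: x \in p |: I by apply: (Hid x y) => //; rewrite in_setU1 yI orbT.
    rewrite in_setU1 => /orP [/eqP xp|//]; subst x; exfalso.
    have := Hm y; rewrite in_setU1 yI orbT => /(_ isT).
    rewrite lt_neqAle xy andbT negbK => /eqP py; subst y.
    by rewrite yI in pI.
  + apply/TplusP; split => // x xI; apply/negP => xp.
    have: x \in p |: I by apply: (Hid x p); [rewrite setU11 | exact: ltW xp].
    rewrite in_setU1 (negbTE xI) orbF => /eqP exp.
    by rewrite exp ltxx in xp.
- case/andP => /idealP Hid /TplusP [_ Hp]; apply/andP; split.
  + apply/idealP => x y; rewrite !in_setU1 => /orP [/eqP -> | yI] xy.
    * rewrite le_eqVlt in xy; case/orP: xy => [->//|xp].
      apply/orP; right; apply: contraT => xI.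
      by have := Hp x xI; rewrite xp.
    * by rewrite (Hid x y yI xy) orbT.
  + apply/TminusP; split; first by rewrite setU11.
    move=> x; rewrite in_setU1 => /orP [/eqP ->|xI]; first by rewrite ltxx.
    apply/negP => px.
    by have := Hid p x xI (ltW px); rewrite (negbTE pI).
Qed.

Lemma sum_Tminus (g : {set P} -> R) (p : P) :
  \sum_(J | is_ideal J && Tminus p J) g J =
  \sum_(I | is_ideal I && Tplus p I) g (p |: I).
Proof.
rewrite (reindex_onto (fun I => p |: I) (fun J => J :\ p)).
  apply: eq_bigl => I; case pI: (p \in I).
    have -> : Tplus p I = false by apply/TplusP => -[]; rewrite pI.
    rewrite andbF; apply/negbTE; rewrite negb_and; apply/orP; right.
    apply/eqP => E; move: pI; rewrite -E; by rewrite setD11.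
  by rewrite ideal_setU1 ?pI // setU1K ?pI // eqxx andbT.
by move=> J /andP[_ /TminusP [pJ _]]; exact: setD1K.
Qed.

Definition W (a b : P -> R) (I : {set P}) :=
  \prod_(x : P) (if x \in I then a x else b x).
Definition Wo (a b : P -> R) (p : P) (I : {set P}) :=
  \prod_(x : P | x != p) (if x \in I then a x else b x).

Lemma key a b p :
  \sum_(I | is_ideal I) W a b I * Tq q p I =
  (b p - q * a p) * \sum_(I | is_ideal I && Tplus p I) Wo a b p I.
Proof.
rewrite /Tq; under eq_bigr do rewrite mulrBr.
rewrite sumrB.
have E1 : \sum_(I | is_ideal I) W a b I * (Tplus p I)%:R =
          \sum_(I | is_ideal I && Tplus p I) W a b I.
  by rewrite big_mkcondr; apply: eq_bigr => I _; case: Tplus; rewrite ?mulr1 ?mulr0.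
have E2 : \sum_(I | is_ideal I) W a b I * (q * (Tminus p I)%:R) =
          q * \sum_(I | is_ideal I && Tplus p I) W a b (p |: I).
  rewrite -sum_Tminus mulr_sumr big_mkcondr; apply: eq_bigr => I _.
  by case: Tminus; rewrite ?mulr1 ?mulr0 // mulrC.
rewrite E1 E2 mulr_sumr mulr_sumr -sumrB; apply: eq_bigr => I /andP[_ /TplusP[pI _]].
rewrite /W /Wo [X in _ - q * X](bigD1 p) // [X in X - _](bigD1 p) //= !inE eqxx /= (negbTE pI).
rewrite [X in q * (_ * X)](eq_bigr (fun x => if x \in I then a x else b x)); last first.
  by move=> x xp; rewrite !inE (negbTE xp).
by rewrite mulrBl mulrA.
Qed.

Lemma total (c : P -> R) (k : R) a b
  (Hc : forall I : {set P}, is_ideal I -> \sum_(p : P) c p * Tq q p I = k) :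
  \sum_(I | is_ideal I) W a b I * k =
  \sum_(p : P) c p * ((b p - q * a p) *
      \sum_(I | is_ideal I && Tplus p I) Wo a b p I).
Proof.
transitivity (\sum_(I | is_ideal I) \sum_(p : P) c p * (W a b I * Tq q p I)).
  apply: eq_bigr => I HI; rewrite -(Hc I HI) mulr_sumr; apply: eq_bigr => p _.
  by rewrite mulrCA.
rewrite exchange_big; apply: eq_bigr => p _; by rewrite -mulr_sumr key.
Qed.

Definition I0 (p0 : P) : {set P} := ~: [set x | (p0 <= x)%O].

Lemma I0_ideal p0 : is_ideal (I0 p0).
Proof.
apply/idealP => x y; rewrite !inE => yI xy; apply: contra yI => px.
exact: le_trans px xy.
Qed.

Lemma Tplus_I0 p0 p : Tplus p (I0 p0) = (p == p0).
Proof.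
apply/TplusP/eqP.
  case=> pI H; rewrite !inE negbK in pI.
  have := H p0; rewrite !inE lexx /= => /(_ isT).
  by rewrite lt_neqAle pI andbT negbK => /eqP.
move=> ->; split; first by rewrite !inE lexx.
move=> x; rewrite !inE negbK => px; apply/negP => xp.
by have := lt_le_trans xp px; rewrite ltxx.
Qed.

End Aux.
Arguments I0_ideal {d P}.
Arguments Tplus_I0 {d P}.
Arguments total {R d P q}.
Arguments W {R d P}.
Arguments Wo {R d P}.
Arguments I0 {d P}.

Theorem theorem2p7 (R : realType) (d : Order.disp_t) (P : finPOrderType d)
  (q : R) (hq : 0 <= q) :
  (* linear independence of the T_p^q as functions on J(P) *)
  (forall c : P -> R,
     (forall I : {set P}, is_ideal I -> \sum_(p : P) c p * Tq q p I = 0) ->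
     forall p : P, c p = 0) /\
  (* the constant function 1 is not in their span *)
  ~ (exists c : P -> R,
       forall I : {set P}, is_ideal I -> \sum_(p : P) c p * Tq q p I = 1).
Proof.
split.
- move=> c Hc p0; case: (eqVneq q 0) => [q0 | qn0].
    have := Hc _ (I0_ideal p0); rewrite (bigD1 p0) //= big1 ?addr0.
      by rewrite /Tq q0 mul0r subr0 Tplus_I0 eqxx mulr1.
    by move=> p pp0; rewrite /Tq q0 mul0r subr0 Tplus_I0 (negbTE pp0) mulr0.
  have qp : 0 < q by rewrite lt_def qn0 hq.
  pose a := fun _ : P => (1 : R).
  pose b := fun x : P => if x == p0 then q + 1 else q.
  have := @total _ _ _ q c 0 a b Hc.
  rewrite big1 ?mulr0 //; last by move=> I _; rewrite mulr0.
  rewrite (bigD1 p0) //= [X in _ + X]big1 ?addr0; last first.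
    by move=> p pp0; rewrite /a /b (negbTE pp0) mulr1 subrr mul0r mulr0.
  rewrite /a /b eqxx mulr1 addrAC subrr add0r mul1r.
  have Wpos : forall I, 0 < Wo a b p0 I.
    move=> I; apply: prodr_gt0 => x _; rewrite /a /b.
    case: (x \in I) => //; case: (x == p0) => //; lra.
  have Spos : 0 < \sum_(I | is_ideal I && Tplus p0 I) Wo a b p0 I.
    rewrite (bigD1 (I0 p0)) /=; last by rewrite I0_ideal Tplus_I0 eqxx.
    have := Wpos (I0 p0).
    have : 0 <= \sum_(I | (is_ideal I && Tplus p0 I) && (I != I0 p0)) Wo a b p0 I.
      by apply: sumr_ge0 => I _; apply: ltW.
    lra.
  move/esym/eqP; rewrite mulf_eq0 => /orP[/eqP //|/eqP S0].
  by rewrite S0 ltxx in Spos.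
- case=> c Hc.
  pose a := fun _ : P => (1 : R).
  pose b := fun _ : P => q.
  have := @total _ _ _ q c 1 a b Hc.
  rewrite [X in _ = X]big1; last by move=> p _; rewrite /a /b /= mulr1 subrr mul0r mulr0.
  have Tid : is_ideal [set: P] by apply/idealP => x y; rewrite !inE.
  rewrite (bigD1 [set: P]) //=.
  have -> : W a b [set: P] = 1 by rewrite /W big1 // => x _; rewrite inE.
  have : 0 <= \sum_(I | is_ideal I && (I != [set: P])) W a b I * 1.
    apply: sumr_ge0 => I _; rewrite mulr1; apply: prodr_ge0 => x _.
    by rewrite /a /b; case: (x \in I).
  set S := \sum_(_ | _) _.
  move=> H; rewrite mul1r => /eqP; rewrite addr_eq0 => /eqP E.
  by move: H; rewrite -[S]opprK -E oppr_ge0 ler10.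
Qed.
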